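(* Let $n\ge 2k\ge 2$, let $S\subseteq\{0,1,\ldots,k-1\}$ be nonempty, and let $X=\bigcup_{i\in S}J(n,k,i)$ (the graph on the $k$-subsets of $\{1,\ldots,n\}$ in which $A\sim B$ iff $|A\cap B|\in S$). If there is perfect state transfer in $X$ between two distinct vertices $A$ and $B$, then $B=\{1,\ldots,n\}\setminus A$.
   Context: $J(n,k,i)$ is the graph on the $k$-subsets of $\{1,\ldots,n\}$ with $A\sim B$ iff $|A\cap B|=i$. For a simple graph $X$ with adjacency matrix $A$, let $\mathcal{H}_X(t)=e^{itA}$; there is perfect state transfer between vertices $u\ne v$ if $|\mathcal{H}_X(\tau)_{u,v}|=1$ for some $\tau>0$. *)

(* Defs.v *)
From HB Require Import structures.
From Stdlib Require Import Reals.
From mathcomp Require Import all_boot.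
Set Implicit Arguments. Unset Strict Implicit. Unset Printing Implicit Defensive.

Definition jvert (n k : nat) := {A : {set 'I_n} | #|A| == k}.

Definition jadj (n k : nat) (S : seq nat) : rel (jvert n k) :=
  fun A B => #|val A :&: val B| \in S.

(* (A^m)_{uv} for the adjacency matrix A of the graph (T,e): number of walks. *)
Fixpoint walks (T : finType) (e : rel T) (m : nat) (u v : T) : nat :=
  match m with
  | 0 => nat_of_bool (u == v)
  | m'.+1 => \sum_(w : T | e u w) walks e m' w v
  end.

Local Open Scope R_scope.

(* e^{itA}_{uv} = sum_m (i t)^m / m! (A^m)_{uv}; real and imaginary parts of the m-th term. *)
Definition ctqw_re_term (T : finType) (e : rel T) (t : R) (u v : T) (m : nat) : R :=
  if odd m then 0
  else pow (-1) (m./2) * pow t m / INR (m`!) * INR (walks e m u v).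

Definition ctqw_im_term (T : finType) (e : rel T) (t : R) (u v : T) (m : nat) : R :=
  if odd m then pow (-1) (m./2) * pow t m / INR (m`!) * INR (walks e m u v)
  else 0.

Definition pst (T : finType) (e : rel T) (u v : T) : Prop :=
  u <> v /\
  exists tau : R, 0 < tau /\
    exists re im : R,
      infinite_sum (ctqw_re_term e tau u v) re /\
      infinite_sum (ctqw_im_term e tau u v) im /\
      re * re + im * im = 1.

(* Main.v *)
From Coquelicot Require Import Coquelicot.
Require Import Defs.
From HB Require Import structures.
From Stdlib Require Import Reals Lra.
From mathcomp Require Import all_boot all_algebra all_fingroup.
From mathcomp Require Import zify.
From mathcomp Require Import Rstruct.

Set Implicit Arguments. Unset Strict Implicit. Unset Printing Implicit Defensive.

Local Open Scope R_scope.

Lemma fact_factorial m : Factorial.fact m = m`!.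
Proof. elim: m => [|m IH] //=; rewrite factS -IH; by []. Qed.

Lemma natpow_expn a n : Nat.pow a n = (a ^ n)%N.
Proof. elim: n => [|n IH] //=; rewrite expnS -IH; by []. Qed.

Lemma INR_fact_neq0 m : INR (m`!) <> 0.
Proof. rewrite -fact_factorial; exact: INR_fact_neq_0. Qed.

Lemma infinite_sum0 : infinite_sum (fun _ => 0) 0.
Proof.
have H : forall n, sum_f_R0 (fun _ => 0) n = 0.
  elim=> [|n IH] //=; rewrite IH; lra.
move=> eps Heps; exists 0%N => n _; rewrite H /R_dist Rminus_0_r Rabs_R0; lra.
Qed.

Lemma rad_inf (a : nat -> R) : (forall r, CV_disk a r) -> forall t, Rbar_lt (Rabs t) (CV_radius a).
Proof.
move=> H t.
have [Hub _] := Lub_Rbar_correct (CV_disk a).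
have := Hub (Rabs t + 1) (H _).
rewrite /CV_radius.
case: (Lub_Rbar (CV_disk a)) => //= l Hl; lra.
Qed.

Section Unit.
Variables (T : finType) (e : rel T).
Hypothesis esym : symmetric e.
Variable w : T.

Definition ca (u : T) (m : nat) : R :=
  if odd m then 0 else (-1)^(m./2) / INR (m`!) * INR (walks e m u w).
Definition sb (u : T) (m : nat) : R :=
  if odd m then (-1)^(m./2) / INR (m`!) * INR (walks e m u w) else 0.

Lemma walks_bound m u v : (walks e m u v <= #|T| ^ m)%N.
Proof.
elim: m u => [|m IH] u /=; first by case: (u == v).
apply: (@leq_trans (\sum_(x : T | e u x) #|T| ^ m)%N).
  by apply: leq_sum => x _; exact: IH.
rewrite sum_nat_const expnS leq_mul2r; apply/orP; right; exact: max_card.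
Qed.

Lemma coef_bound (f : T -> nat -> R) u r :
  (forall m, f u m = 0 \/ Rabs (f u m) = / INR (m`!) * INR (walks e m u w)) ->
  CV_disk (f u) r.
Proof.
move=> Hf.
rewrite /CV_disk.
have [l Hl] := exist_exp (INR #|T| * Rabs r).
apply: (ex_series_le _ (fun n => / INR (Factorial.fact n) * (INR #|T| * Rabs r) ^ n)).
  move=> n.
  change (norm (Rabs (f u n * r ^ n))) with (Rabs (Rabs (f u n * r ^ n))).
  rewrite Rabs_Rabsolu Rabs_mult -RPow_abs Rpow_mult_distr fact_factorial.
  have Hp : 0 <= Rabs r ^ n by apply: pow_le; apply: Rabs_pos.
  have Hi : 0 < / INR (n`!) by apply: Rinv_0_lt_compat; rewrite -fact_factorial; apply: INR_fact_lt_0.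
  have Hw : INR (walks e n u w) <= INR #|T| ^ n.
    rewrite -pow_INR; apply: le_INR; apply/leP; rewrite natpow_expn; exact: walks_bound.
  case: (Hf n) => ->.
    rewrite Rabs_R0 Rmult_0_l; apply: Rmult_le_pos; first lra.
    apply: Rmult_le_pos => //; apply: pow_le; apply: pos_INR.
  rewrite -Rmult_assoc; apply: Rmult_le_compat_r => //.
  apply: Rmult_le_compat_l => //; lra.
exists l; by apply/is_series_Reals.
Qed.


Lemma INR_muln a b : INR (a * b)%N = INR a * INR b.
Proof. exact: mult_INR. Qed.

Lemma abs_coef k m W : Rabs ((-1)^k / INR (m`!) * INR W) = / INR (m`!) * INR W.
Proof.
rewrite Rabs_mult /Rdiv Rabs_mult pow_1_abs (Rabs_pos_eq (INR W)); last exact: pos_INR.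
rewrite (Rabs_pos_eq (/ _)); first lra.
apply: Rlt_le; apply: Rinv_0_lt_compat; rewrite -fact_factorial; apply: INR_fact_lt_0.
Qed.

Lemma ca_disk u r : CV_disk (ca u) r.
Proof.
apply: coef_bound => m; rewrite /ca; case: (odd m); [left | right] => //.
exact: abs_coef.
Qed.

Lemma sb_disk u r : CV_disk (sb u) r.
Proof.
apply: coef_bound => m; rewrite /sb; case: (odd m); [right | left] => //.
exact: abs_coef.
Qed.

Lemma walksS m u :
  INR (walks e m.+1 u w) = \big[Rplus/0]_(x | e u x) INR (walks e m x w).
Proof.
rewrite /=; apply: (big_morph INR) => //.
move=> a b; exact: plus_INR.
Qed.

Lemma dca u n : PS_derive (ca u) n = \big[Rplus/0]_(x | e u x) (- sb x n).
Proof.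
rewrite /PS_derive /ca /sb /=.
case Ho: (odd n) => /=.
  rewrite walksS.
  rewrite [RHS](eq_bigr (fun x => (- ((-1) ^ n./2 / INR n`!)) * INR (walks e n x w))); last first.
    move=> x _; ring.
  rewrite -big_distrr /=.
  rewrite uphalf_half Ho ?add1n ?add0n -?tech_pow_Rmult factS INR_muln -/(INR n.+1).
  have H1 := @INR_fact_neq0 n.
  have H2 : INR n.+1 <> 0 by apply: not_0_INR.
  field; split => //.
rewrite Rmult_0_r big1 //= => x _; lra.
Qed.

Lemma dsb u n : PS_derive (sb u) n = \big[Rplus/0]_(x | e u x) (ca x n).
Proof.
rewrite /PS_derive /ca /sb /=.
case Ho: (odd n) => /=.
  rewrite Rmult_0_r big1 //= => x _; lra.
rewrite walksS.
rewrite [RHS](eq_bigr (fun x => ((-1) ^ n./2 / INR n`!) * INR (walks e n x w))); last first.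
  move=> x _; ring.
rewrite -big_distrr /=.
rewrite uphalf_half Ho ?add1n ?add0n -?tech_pow_Rmult factS INR_muln -/(INR n.+1).
have H1 := @INR_fact_neq0 n.
have H2 : INR n.+1 <> 0 by apply: not_0_INR.
field; split => //.
Qed.


Definition cc u t := PSeries (ca u) t.
Definition ss u t := PSeries (sb u) t.

Lemma is_pseries_sum (l : seq T) (P : pred T) (f : T -> nat -> R) t :
  (forall x, ex_pseries (f x) t) ->
  is_pseries (fun n => \big[Rplus/0]_(x <- l | P x) f x n) t
             (\big[Rplus/0]_(x <- l | P x) PSeries (f x) t).
Proof.
move=> Hf; elim: l => [|x l IH].
  rewrite big_nil; apply/is_pseries_R.
  apply: (is_series_ext (fun _ => 0)) => [n|]; first by rewrite big_nil Rmult_0_l.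
  apply/is_series_Reals; exact: infinite_sum0.
rewrite big_cons; apply/is_pseries_R.
case Px: (P x).
  apply: (is_series_ext (fun n => plus (f x n * t ^ n) (\big[Rplus/0]_(y <- l | P y) f y n * t ^ n))).
    move=> n; rewrite big_cons Px; rewrite /plus /=; ring.
  apply: is_series_plus; apply/is_pseries_R; [exact: PSeries_correct | exact: IH].
apply: (is_series_ext (fun n => \big[Rplus/0]_(y <- l | P y) f y n * t ^ n)).
  by move=> n; rewrite big_cons Px.
by apply/is_pseries_R.
Qed.

Lemma PSeries_sum (l : seq T) (P : pred T) (f : T -> nat -> R) t :
  (forall x, ex_pseries (f x) t) ->
  PSeries (fun n => \big[Rplus/0]_(x <- l | P x) f x n) t =
  \big[Rplus/0]_(x <- l | P x) PSeries (f x) t.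
Proof. move=> Hf; apply: is_pseries_unique; exact: is_pseries_sum. Qed.

Lemma dcc u t : is_derive (cc u) t (\big[Rplus/0]_(x | e u x) - ss x t).
Proof.
have := is_derive_PSeries (ca u) t (rad_inf (ca_disk u) t).
rewrite (PSeries_ext _ _ _ (dca u)) PSeries_sum; last first.
  move=> x; apply: CV_disk_correct; apply: (@coef_bound (fun x n => - sb x n)) => m.
  rewrite /sb Rabs_Ropp; case: (odd m); [right|left]; last lra.
  exact: abs_coef.
congr is_derive; apply: eq_bigr => x _.
rewrite /ss -PSeries_opp; apply: PSeries_ext => n; by [].
Qed.

Lemma dss u t : is_derive (ss u) t (\big[Rplus/0]_(x | e u x) cc x t).
Proof.
have := is_derive_PSeries (sb u) t (rad_inf (sb_disk u) t).
rewrite (PSeries_ext _ _ _ (dsb u)) PSeries_sum //.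
move=> x; apply: CV_disk_correct; exact: ca_disk.
Qed.


Lemma sum_opp (r : seq T) (P : pred T) (F : T -> R) :
  \big[Rplus/0]_(i <- r | P i) - F i = - \big[Rplus/0]_(i <- r | P i) F i.
Proof.
symmetry; apply: (big_morph Ropp (fun x y => Ropp_plus_distr x y)); exact: Ropp_0.
Qed.

Lemma is_derive_sumT (l : seq T) (G : T -> R -> R) (G' : T -> R) t :
  (forall u, is_derive (G u) t (G' u)) ->
  is_derive (fun t => \big[Rplus/0]_(u <- l) G u t) t (\big[Rplus/0]_(u <- l) G' u).
Proof.
move=> HG; elim: l => [|x l IH].
  rewrite big_nil; apply: (is_derive_ext (fun _ => 0)) => [t'|]; first by rewrite big_nil.
  exact: is_derive_const.
rewrite big_cons.
apply: (is_derive_ext (fun t => plus (G x t) (\big[Rplus/0]_(u <- l) G u t))).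
  by move=> t'; rewrite big_cons.
exact: is_derive_plus.
Qed.

Definition FF t := \big[Rplus/0]_(u : T) (cc u t * cc u t + ss u t * ss u t).

Lemma FF_deriv t : is_derive FF t 0.
Proof.
set dC := fun u => \big[Rplus/0]_(x | e u x) - ss x t.
set dS := fun u => \big[Rplus/0]_(x | e u x) cc x t.
have H := @is_derive_sumT (index_enum T)
  (fun u t => plus (mult (cc u t) (cc u t)) (mult (ss u t) (ss u t)))
  (fun u => plus (plus (mult (dC u) (cc u t)) (mult (cc u t) (dC u)))
                 (plus (mult (dS u) (ss u t)) (mult (ss u t) (dS u)))) t.
have {}H := H (fun u => is_derive_plus _ _ _ _ _
   (is_derive_mult _ _ _ _ _ (dcc u t) (dcc u t) Rmult_comm)
   (is_derive_mult _ _ _ _ _ (dss u t) (dss u t) Rmult_comm)).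
rewrite /FF; move: H; congr is_derive.
rewrite /plus /mult /=.
set g := fun u x => if e u x then ss u t * cc x t - cc u t * ss x t else 0.
have E1 : forall u, dC u * cc u t + cc u t * dC u + (dS u * ss u t + ss u t * dS u)
           = 2 * \big[Rplus/0]_(x : T) g u x.
  move=> u; rewrite /dC /dS !(big_mkcond (fun x => e u x)) /=.
  have -> : forall a b c d : R, a * b + b * a + (c * d + d * c) = 2 * (b * a + d * c) by move=> *; ring.
  congr (2 * _); rewrite !big_distrr -big_split /=; apply: eq_bigr => x _.
  rewrite /g; case: (e u x); ring.
rewrite (eq_bigr _ (fun u _ => E1 u)) -big_distrr /=.
set Z := \big[Rplus/0]_(u : T) \big[Rplus/0]_(x : T) g u x.
suff : Z = - Z by lra.
rewrite {1}/Z exchange_big /= -sum_opp; apply: eq_bigr => x _.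
rewrite -sum_opp; apply: eq_bigr => u _.
rewrite /g esym; case: (e x u); ring.
Qed.

Lemma FF0 : FF 0 = 1.
Proof.
rewrite /FF (bigD1 w) //= big1.
  rewrite /cc /ss !PSeries_0 /ca /sb /= eqxx /=; lra.
move=> u Hu; rewrite /cc /ss !PSeries_0 /ca /sb /= (negbTE Hu) /=; lra.
Qed.

Lemma FF_const t : 0 < t -> FF t = 1.
Proof.
move=> Ht; rewrite -FF0; symmetry; apply: eq_is_derive => // x _; exact: FF_deriv.
Qed.


Lemma link_re u u' t re : (forall m, walks e m u w = walks e m u' w) ->
  infinite_sum (ctqw_re_term e t u w) re -> re = cc u' t.
Proof.
move=> Hw H; apply: (uniqueness_sum _ _ _ H); apply/is_series_Reals.
have := PSeries_correct (ca u') t (CV_disk_correct _ _ (ca_disk u' t)).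
move/is_pseries_R; apply: is_series_ext => m.
rewrite /ctqw_re_term /ca Hw; case: (odd m); rewrite /Rdiv ?Rmult_0_l //.
have H0 : forall a b c d : R, a * b * c * d = a * d * b * c by move=> *; ring.
by rewrite H0.
Qed.

Lemma link_im u u' t im : (forall m, walks e m u w = walks e m u' w) ->
  infinite_sum (ctqw_im_term e t u w) im -> im = ss u' t.
Proof.
move=> Hw H; apply: (uniqueness_sum _ _ _ H); apply/is_series_Reals.
have := PSeries_correct (sb u') t (CV_disk_correct _ _ (sb_disk u' t)).
move/is_pseries_R; apply: is_series_ext => m.
rewrite /ctqw_im_term /sb Hw; case: (odd m); rewrite /Rdiv ?Rmult_0_l //.
have H0 : forall a b c d : R, a * b * c * d = a * d * b * c by move=> *; ring.
by rewrite H0.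
Qed.

Lemma no_two u u' : u != u' -> (forall m, walks e m u w = walks e m u' w) ->
  pst e u w -> False.
Proof.
move=> Hne Hw [_ [tau [Htau [re [im [Hre [Him H1]]]]]]].
have E1 := @link_re u u tau re (fun _ => erefl) Hre.
have E2 := @link_im u u tau im (fun _ => erefl) Him.
have E3 := link_re Hw Hre.
have E4 := link_im Hw Him.
have := FF_const Htau.
rewrite /FF (bigD1 u) //= (bigD1 u') /=; last by rewrite eq_sym.
have Hpos : 0 <= \big[Rplus/0]_(i | (i != u) && (i != u'))
                   (cc i tau * cc i tau + ss i tau * ss i tau).
  apply: (big_ind (fun x => 0 <= x)); [lra | move=> *; lra | move=> i _; nra].
rewrite -E1 -E2 -E3 -E4; lra.
Qed.

End Unit.

Lemma walks_auto (T : finType) (e : rel T) (f : T -> T) :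
  cancel f f -> (forall x y, e (f x) (f y) = e x y) ->
  forall m u v, walks e m (f u) (f v) = walks e m u v.
Proof.
move=> fK fe; elim=> [|m IH] u v /=.
  by rewrite (inj_eq (can_inj fK)).
rewrite (reindex_inj (can_inj fK)) /=.
apply: eq_big => x; [by rewrite fe | by rewrite IH].
Qed.

Lemma jvert_inj n k (C D : jvert n k) : val C = val D -> C = D.
Proof. exact: (@val_inj _ _ _ (C : {A : {set 'I_n} | #|A| == k}) D). Qed.

Definition jmap n k (p : {perm 'I_n}) (C : jvert n k) : jvert n k.
Proof.
exists (p @: val C).
rewrite card_imset; [exact: (valP C) | exact: perm_inj].
Defined.

Lemma mem_tperm n (x y z : 'I_n) (C : {set 'I_n}) :
  (z \in tperm x y @: C) = (tperm x y z \in C).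
Proof.
apply/imsetP/idP => [[c Hc ->]|Hz]; first by rewrite tpermK.
by exists (tperm x y z); rewrite ?tpermK.
Qed.

Theorem mainTheorem16 (n k : nat) (S : seq nat) :
  (1 <= k)%N -> (2 * k <= n)%N ->
  S != [::] -> all (fun i => (i < k)%N) S ->
  forall A B : jvert n k, A <> B ->
  pst (jadj S) A B -> val B = ~: val A.
Proof.
move=> Hk Hn _ _ A B HAB Hpst.
case: (eqVneq (val B) (~: val A)) => // Hne; exfalso.
have HcA : #|val A| = k by apply/eqP; exact: (valP A).
have /card_gt0P [a Ha] : (0 < #|val A|)%N by rewrite HcA.
have /card_gt0P [b Hb] : (0 < #|~: val A|)%N.
  have := cardsC (val A); rewrite card_ord HcA; lia.
rewrite in_setC in Hb.
have [x [y [HxA [HyA HxyB]]]] : exists x y, x \in val A /\ y \notin val A /\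
    (x \in val B) = (y \in val B).
  case: (boolP [exists x, exists y, [&& x \in val A, y \notin val A &
                                       (x \in val B) == (y \in val B)]]).
    move/existsP => [x /existsP [y /and3P [H1 H2 /eqP H3]]].
    by exists x, y.
  move/existsPn => Hno; exfalso.
  have Hxy : forall x y, x \in val A -> y \notin val A ->
      (x \in val B) = ~~ (y \in val B).
    move=> x y H1 H2; move/existsPn: (Hno x) => /(_ y).
    by rewrite H1 H2 /=; case: (x \in val B); case: (y \in val B).
  case Hab: (a \in val B).
    apply: HAB; apply: jvert_inj; apply/setP => z.
    case Hz: (z \in val A).
      by rewrite (Hxy z b Hz Hb) -(negbK (b \in val B)) -(Hxy a b Ha Hb) Hab.
    have Hz' : z \notin val A by rewrite Hz.
    by rewrite (Hxy a z Ha Hz') in Hab; symmetry; apply/negbTE; rewrite Hab.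
  move/eqP: Hne; apply; apply/setP => z; rewrite in_setC.
  case Hz: (z \in val A) => /=.
    by rewrite (Hxy z b Hz Hb) -(Hxy a b Ha Hb) Hab.
  have Hz' : z \notin val A by rewrite Hz.
  by rewrite (Hxy a z Ha Hz') in Hab; apply/negbFE; rewrite Hab.
set sg := tperm x y.
set jm := @jmap n k sg.
have jK : cancel (jm) (jm).
  move=> C; apply: jvert_inj; apply/setP => z; by rewrite /= !mem_tperm tpermK.
have je : forall C D, jadj S (jm C) (jm D) = jadj S C D.
  move=> C D; rewrite /jadj /= -imsetI; last by move=> ? ? _ _; exact: perm_inj.
  by rewrite card_imset //; exact: perm_inj.
have HB' : jm B = B.
  apply: jvert_inj; apply/setP => z; rewrite /= mem_tperm /sg.
  by case: tpermP => [->|->|].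
have HA' : A != jm A.
  apply/eqP => E; have : x \in val (jm A) by rewrite -E.
  by rewrite /= mem_tperm /sg tpermL (negbTE HyA).
have esym : forall C D : jvert n k, jadj S C D = jadj S D C.
  move=> C D; rewrite /jadj /= setIC; done.
apply: (@no_two _ (jadj S) esym B A (jm A) HA') => //.
move=> m; by rewrite -{2}HB' (walks_auto jK je).
Qed.
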